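(* Let $K\ge L\ge T\ge 2$ be integers, let $\kappa,\lambda$ be the smallest non-negative integers such that $K+1+\kappa$ and $L+1+\lambda$ are coprime to $T-1$, and put $K^\star=K+1+\kappa$, $L^\star=L+1+\lambda$, $\bar T=T-1$, $q=K^\star L^\star+\bar T^2$. Then $K^\star$, $L^\star$ and $\bar T$ are each coprime to $q$. Moreover, for every integer $x$ coprime to $q$ there exists a unique integer $y\in\{0,\dots,q-1\}$ with $x\bar T+yK^\star\equiv 0\pmod q$, and this $y$ is coprime to $q$. *)

(* Defs.v *)
From mathcomp Require Import all_boot all_order all_algebra.
Set Implicit Arguments. Unset Strict Implicit. Unset Printing Implicit Defensive.
Import Order.TTheory GRing.Theory Num.Theory.

Definition is_least_shift (n m k : nat) : Prop :=
  coprime (n + 1 + k) m /\ (forall j, j < k -> ~~ coprime (n + 1 + j) m).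

(* Main.v *)
Require Import Defs.
From mathcomp Require Import all_boot all_order all_algebra.
From mathcomp Require Import ring.
Import Order.TTheory GRing.Theory Num.Theory.
Local Open Scope ring_scope.

Lemma coprimez_natE (m n : nat) : coprimez m%:Z n%:Z = coprime m n.
Proof. by rewrite /coprimez /coprime /gcdz /=. Qed.

Theorem claim1 (K L T kappa lambda : nat)
  (hKL : (L <= K)%N) (hLT : (T <= L)%N) (hT : (2 <= T)%N)
  (hkappa : is_least_shift K T.-1 kappa)
  (hlambda : is_least_shift L T.-1 lambda) :
  let Ks := (K + 1 + kappa)%N in
  let Ls := (L + 1 + lambda)%N in
  let Tb := T.-1 in
  let q := (Ks * Ls + Tb ^ 2)%N in
  [/\ coprime Ks q, coprime Ls q, coprime Tb q &
    forall x : int, coprimez x q%:Z ->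
      exists y : int,
        [/\ 0 <= y < q%:Z,
            (x * Tb%:Z + y * Ks%:Z == 0 %[mod q%:Z])%Z,
            coprimez y q%:Z &
            forall y' : int, 0 <= y' < q%:Z ->
              (x * Tb%:Z + y' * Ks%:Z == 0 %[mod q%:Z])%Z -> y' = y]].
Proof.
move=> Ks Ls Tb q.
have cK : coprime Ks Tb by case: hkappa.
have cL : coprime Ls Tb by case: hlambda.
have cKq : coprime Ks q.
  rewrite /coprime /q mulnC gcdnMDl; exact: coprimeXr.
have cLq : coprime Ls q.
  rewrite /coprime /q gcdnMDl; exact: coprimeXr.
have cTq : coprime Tb q.
  have -> : q = (Tb * Tb + Ks * Ls)%N by rewrite /q addnC expnS expn1.
  rewrite /coprime gcdnMDl -/(coprime _ _) coprimeMr.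
  by rewrite coprime_sym cK coprime_sym cL.
split => // x cxq.
have q0 : q%:Z != 0.
  have hTb : (0 < Tb)%N by rewrite /Tb -subn1 subn_gt0.
  by rewrite eqz_nat /q -lt0n addn_gt0 expn_gt0 hTb orbT.
have cKqz : coprimez Ks%:Z q%:Z by rewrite coprimez_natE.
have cTqz : coprimez Tb%:Z q%:Z by rewrite coprimez_natE.
have [u [v huv]] := Bezoutz Ks%:Z q%:Z.
move: huv; rewrite /coprimez in cKqz; rewrite (eqP cKqz) => huv.
set a := - (x * Tb%:Z * u).
exists (a %% q%:Z)%Z.
have hmod : (x * Tb%:Z + (a %% q%:Z)%Z * Ks%:Z == 0 %[mod q%:Z])%Z.
  rewrite eqz_mod_dvd subr0; apply/dvdzP.
  exists (x * Tb%:Z * v - (a %/ q%:Z)%Z * Ks%:Z).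
  have -> : (a %% q%:Z)%Z = a - (a %/ q%:Z)%Z * q%:Z.
    by apply/eqP; rewrite eq_sym subr_eq addrC -divz_eq.
  set D := (a %/ q%:Z)%Z.
  rewrite /a -{1}[x * Tb%:Z]mulr1 -huv. ring.
have hr : 0 <= (a %% q%:Z)%Z < q%:Z.
  rewrite modz_ge0 //=. by have := ltz_mod a q0; rewrite ger0_norm.
split => //.
- set y := (a %% q%:Z)%Z in hmod hr *.
  move: hmod; rewrite eqz_mod_dvd subr0 => /dvdzP [k hk].
  have [[s1 t1] /= e1] := coprimezP _ _ cxq.
  have [[s2 t2] /= e2] := coprimezP _ _ cTqz.
  apply/coprimezP.
  exists (- (s1 * s2 * Ks%:Z), s1 * s2 * k + s1 * x * t2 + t1 * s2 * Tb%:Z + t1 * t2 * q%:Z) => /=.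
  have -> : 1 = (s1 * x + t1 * q%:Z) * (s2 * Tb%:Z + t2 * q%:Z) by rewrite e1 e2 mulr1.
  apply/eqP; rewrite -subr_eq0; apply/eqP.
  transitivity (s1 * s2 * (k * q%:Z - (x * Tb%:Z + y * Ks%:Z))); first ring.
  by rewrite -hk subrr mulr0.
- move=> y' /andP [y'0 y'q] hy'.
  rewrite -(@modz_small y' q%:Z) ?y'0 ?y'q // -[RHS](@modz_small _ q%:Z hr).
  apply/eqP; rewrite eqz_mod_dvd.
  have cqK : coprimez q%:Z Ks%:Z by rewrite coprimez_natE coprime_sym.
  rewrite -(Gauss_dvdzl _ cqK).
  move: hmod hy'; rewrite !eqz_mod_dvd !subr0 => h1 h2.
  have -> : (y' - (a %% q%:Z)%Z) * Ks%:Z = (x * Tb%:Z + y' * Ks%:Z) - (x * Tb%:Z + (a %% q%:Z)%Z * Ks%:Z) by ring.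
  exact: rpredB.
Qed.
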